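(* Let $(F_n)_{n\ge0}$ be the Fibonacci sequence ($F_0=0$, $F_1=1$, $F_{n+2}=F_{n+1}+F_n$) and $\alpha=(1+\sqrt5)/2$. Let $p\ge 5$ be a prime and $c$ an integer, and suppose $c=F_{k_i}-p^{\ell_i}$ for $i=1,\dots,m$, where $(k_i,\ell_i)$ are all the distinct pairs of integers with $k_i\ge 2$, $\ell_i\ge 0$ satisfying this, indexed so that $\ell_1>\ell_2>\cdots>\ell_m\ge 0$ (then $k_1>k_2>\cdots>k_m\ge 2$). Then for every $i=1,\dots,m-1$, $$k_i\log\alpha-\ell_i\log p\in\big(\log(\alpha/1.25),\,4\log\alpha\big)\subset(0.25,\,2).$$ *)

(* Defs.v *)
From Stdlib Require Import Reals ZArith Znumtheory Lra Lia.
Open Scope R_scope.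

Fixpoint fib (n : nat) : nat :=
  match n with
  | O => O
  | S n' => match n' with
            | O => 1%nat
            | S n'' => (fib n' + fib n'')%nat
            end
  end.

Definition alpha : R := (1 + sqrt 5) / 2.

Definition is_sol (p : nat) (c : Z) (k l : nat) : Prop :=
  (2 <= k)%nat /\ (Z.of_nat (fib k) - Z.of_nat p ^ Z.of_nat l = c)%Z.

(* Main.v *)
Require Import Defs.
From Stdlib Require Import Reals ZArith Znumtheory Lra Lia.
Open Scope R_scope.

Lemma sqrt5_bounds : 2225/1000 < sqrt 5 < 2245/1000.
Proof.
  assert (H0 := sqrt_pos 5). assert (H1 := sqrt_sqrt 5 ltac:(lra)).
  split; nra.
Qed.

Lemma alpha_sq : alpha ^ 2 = alpha + 1.
Proof.
  unfold alpha. assert (H1 := sqrt_sqrt 5 ltac:(lra)). simpl. nra.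
Qed.

Lemma alpha_bounds : 1612/1000 < alpha < 1623/1000.
Proof. unfold alpha. destruct sqrt5_bounds. split; lra. Qed.

Lemma fib_SS n : fib (S (S n)) = (fib (S n) + fib n)%nat.
Proof. reflexivity. Qed.

Lemma fib_up_aux n : INR (fib (S n)) <= alpha ^ n /\ INR (fib (S (S n))) <= alpha ^ (S n).
Proof.
  destruct alpha_bounds.
  induction n as [|n [IH1 IH2]].
  - simpl. lra.
  - split; [exact IH2|].
    rewrite fib_SS, plus_INR.
    replace (alpha ^ S (S n)) with (alpha ^ n * alpha ^ 2) by (rewrite <- pow_add; f_equal; lia).
    rewrite alpha_sq. simpl in *. nra.
Qed.

Lemma fib_up n : INR (fib (S n)) <= alpha ^ n.
Proof. apply fib_up_aux. Qed.

Lemma fib_lo_aux n : alpha ^ n <= INR (fib (S (S n))) /\ alpha ^ S n <= INR (fib (S (S (S n)))).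
Proof.
  destruct alpha_bounds.
  induction n as [|n [IH1 IH2]].
  - simpl. lra.
  - split; [exact IH2|].
    rewrite (fib_SS (S (S n))), plus_INR.
    replace (alpha ^ S (S n)) with (alpha ^ n * alpha ^ 2) by (rewrite <- pow_add; f_equal; lia).
    rewrite alpha_sq. simpl in *. nra.
Qed.

Lemma fib_lo n : alpha ^ n <= INR (fib (S (S n))).
Proof. apply fib_lo_aux. Qed.

Lemma fib_step n : (fib n <= fib (S n))%nat.
Proof. destruct n. simpl; lia. rewrite fib_SS. lia. Qed.

Lemma fib_mono a b : (a <= b)%nat -> (fib a <= fib b)%nat.
Proof.
  induction 1. lia. pose proof (fib_step m). lia.
Qed.

Lemma ln_le_xm1 x : 0 < x -> ln x <= x - 1.
Proof. intros. pose proof (exp_ineq1_le (ln x)). rewrite exp_ln in H0; lra. Qed.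

Lemma num1 : 1 / 4 < ln (alpha / (5 / 4)).
Proof.
  destruct alpha_bounds.
  assert (Hq : 1/64 <= ln (64/63)).
  { replace (64/63) with (/ (63/64)) by field. rewrite ln_Rinv by lra.
    pose proof (ln_le_xm1 (63/64) ltac:(lra)). lra. }
  assert (Hp : (64/63)^16 < 129/100) by (simpl; lra).
  assert (ln ((64/63)^16) < ln (alpha / (5/4))).
  { apply ln_increasing. apply pow_lt; lra. lra. }
  rewrite ln_pow in H1 by lra. simpl INR in H1. lra.
Qed.

Lemma num2 : 4 * ln alpha < 2.
Proof.
  destruct alpha_bounds.
  assert (Hq : ln (17/16) <= 1/16) by (pose proof (ln_le_xm1 (17/16) ltac:(lra)); lra).
  assert (Hp : (17/16)^8 > 1623/1000) by (simpl; lra).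
  assert (ln alpha < ln ((17/16)^8)).
  { apply ln_increasing; lra. }
  rewrite ln_pow in H1 by lra. simpl INR in H1. lra.
Qed.

Theorem lemma3p1 (p : nat) (c : Z) (m : nat) (k l : nat -> nat)
  (hp : prime (Z.of_nat p)) (hp5 : (5 <= p)%nat)
  (hsol : forall i, (i < m)%nat -> is_sol p c (k i) (l i))
  (hdec : forall i, (S i < m)%nat -> (l (S i) < l i)%nat)
  (hall : forall kk ll, is_sol p c kk ll ->
            exists i, (i < m)%nat /\ k i = kk /\ l i = ll) :
  forall i, (S i < m)%nat ->
    ln (alpha / (5 / 4)) < INR (k i) * ln alpha - INR (l i) * ln (INR p) < 4 * ln alpha
    /\ 1 / 4 < ln (alpha / (5 / 4)) /\ 4 * ln alpha < 2.
Proof.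
  intros i Hi.
  split; [|split; [exact num1|exact num2]].
  destruct (hsol i ltac:(lia)) as [Hk1 E1].
  destruct (hsol (S i) Hi) as [Hk2 E2].
  pose proof (hdec i Hi) as Hl.
  set (a := k i) in *. set (b := k (S i)) in *.
  set (L := l i) in *. set (L' := l (S i)) in *.
  rewrite <- !Nat2Z.inj_pow in E1, E2.
  assert (EN : (fib a + p ^ L' = fib b + p ^ L)%nat) by lia.
  assert (HpL : (p ^ L' < p ^ L)%nat) by (apply Nat.pow_lt_mono_r; lia).
  assert (Hab : (b < a)%nat).
  { destruct (Nat.lt_ge_cases b a) as [|Hba]; [assumption|].
    pose proof (fib_mono _ _ Hba). lia. }
  assert (ER : INR (fib a) + INR p ^ L' = INR (fib b) + INR p ^ L).
  { rewrite <- !pow_INR, <- !plus_INR. f_equal. exact EN. }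
  destruct alpha_bounds as [Ha1 Ha2].
  assert (HP : 5 <= INR p) by (assert (INR 5 <= INR p) by (apply le_INR; lia); simpl in H; lra).
  assert (HpLpos : 0 < INR p ^ L) by (apply pow_lt; lra).
  assert (HpL'pos : 1 <= INR p ^ L') by (apply pow_R1_Rle; lra).
  assert (Hfb1 : 1 <= INR (fib b)).
  { assert (INR 1 <= INR (fib b)) by (apply le_INR; pose proof (fib_mono 2 b Hk2); simpl in H; lia). simpl in H; lra. }
  assert (Hlow : alpha / (5/4) < alpha ^ a / INR p ^ L).
  { destruct L as [|L0]; [lia|].
    assert (INR p ^ L' <= INR p ^ L0) by (apply Rle_pow; [lra|lia]).
    assert (Hfa : alpha * INR (fib a) <= alpha ^ a).
    { destruct a as [|a0]; [lia|]. pose proof (fib_up a0). rewrite <- tech_pow_Rmult. nra. }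
    simpl pow in *.
    assert (HF : 4/5 * (INR p * INR p ^ L0) < INR (fib a)).
    { assert (0 < INR p ^ L0) by (apply pow_lt; lra). nra. }
    assert (Hm : alpha * (4/5 * (INR p * INR p ^ L0)) < alpha ^ a) by nra.
    apply Rmult_lt_reg_r with (INR p * INR p ^ L0). nra.
    replace (alpha ^ a / (INR p * INR p ^ L0) * (INR p * INR p ^ L0)) with (alpha ^ a).
    2:{ field. assert (0 < INR p ^ L0) by (apply pow_lt; lra). nra. }
    replace (alpha / (5 / 4) * (INR p * INR p ^ L0)) with (alpha * (4/5 * (INR p * INR p ^ L0))) by field.
    exact Hm. }
  assert (Hkey : alpha ^ a < alpha ^ 4 * INR p ^ L).
  { assert (HpL1 : 1 <= INR p ^ L) by (apply pow_R1_Rle; lra).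
    assert (H4 : 0 < alpha ^ 4) by (apply pow_lt; lra).
    assert (Hfa1 : (fib b <= fib (pred a))%nat) by (apply fib_mono; lia).
    destruct a as [|[|[|[|a0]]]]; try lia.
    - assert (alpha ^ 3 < alpha ^ 4) by (simpl; nra).
      nra.
    - simpl pred in Hfa1.
      pose proof (fib_lo a0) as Hlo.
      assert (Hb : INR (fib b) <= INR (fib (S (S (S a0))))) by (apply le_INR; exact Hfa1).
      rewrite (fib_SS (S (S a0))), plus_INR in ER.
      replace (alpha ^ S (S (S (S a0)))) with (alpha ^ a0 * alpha ^ 4) by (rewrite <- pow_add; f_equal; lia).
      assert (alpha ^ a0 < INR p ^ L) by lra.
      nra. }
  assert (Hup : alpha ^ a / INR p ^ L < alpha ^ 4).
  { apply Rmult_lt_reg_r with (INR p ^ L). lra.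
    replace (alpha ^ a / INR p ^ L * INR p ^ L) with (alpha ^ a) by (field; lra).
    exact Hkey. }
  assert (HA : 0 < alpha ^ a) by (apply pow_lt; lra).
  rewrite <- ln_pow by lra. rewrite <- (ln_pow (INR p)) by lra.
  replace (ln (alpha ^ a) - ln (INR p ^ L)) with (ln (alpha ^ a / INR p ^ L)).
  2:{ unfold Rdiv. rewrite ln_mult, ln_Rinv; try lra. apply Rinv_0_lt_compat; lra. }
  split.
  - apply ln_increasing; [|exact Hlow]. lra.
  - replace (4 * ln alpha) with (ln (alpha ^ 4)) by (rewrite ln_pow by lra; simpl; lra).
    apply ln_increasing; [|exact Hup]. apply Rdiv_lt_0_compat; lra.
Qed.
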